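(* Let $\mathcal{G}$ be a directed graph with finite vertex set $\mathcal{V}_\mathcal{G}$ (totally ordered), edge set $\mathcal{E}_\mathcal{G}$, no self-loops, and nonnegative adjacency matrix $\mathbf{A}$ (with $A_{uv}>0$ iff $(u,v)\in\mathcal{E}_\mathcal{G}$), and let $\tilde{\mathbf{g}}\in\mathbb{R}^{|\mathcal{V}_\mathcal{G}|}$. Let $\tilde{\mathcal{E}}_\mathcal{G}=\{(u,v):(u,v)\in\mathcal{E}_\mathcal{G}\text{ or }(v,u)\in\mathcal{E}_\mathcal{G}\}$ and $m=|\tilde{\mathcal{E}}_\mathcal{G}|/2$. Let $\boldsymbol{\alpha}\in[0,1]^m$ collect the variables $\alpha_{uv}$ for $(u,v)\in\tilde{\mathcal{E}}_\mathcal{G}$ with $u<v$, and set $\alpha_{vu}:=1-\alpha_{uv}$. Define $f_A:\mathbb{R}^m\to\mathbb{R}^{|\mathcal{V}_\mathcal{G}|}$ by $[f_A(\boldsymbol{\alpha})]_u=\sum_{v:(u,v)\in\tilde{\mathcal{E}}_\mathcal{G}}(A_{uv}\alpha_{uv}-A_{vu}\alpha_{vu})$ and $\Psi(\boldsymbol{\alpha})=\|f_A(\boldsymbol{\alpha})-\tilde{\mathbf{g}}\|_2^2$. Then: (a) $\min_{\|\mathbf{y}\|_2\le1}\big(Q_1^{(g)}(\mathbf{y})-\langle\mathbf{y},\tilde{\mathbf{g}}\rangle\big)=-\min_{\boldsymbol{\alpha}\in[0,1]^m}\|f_A(\boldsymbol{\alpha})-\tilde{\mathbf{g}}\|_2$,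 so that the dual problem is $\min_{\boldsymbol{\alpha}\in[0,1]^m}\Psi(\boldsymbol{\alpha})$; (b) if $\boldsymbol{\alpha}^*$ minimizes $\Psi$ over $[0,1]^m$ and $f_A(\boldsymbol{\alpha}^* )\neq\tilde{\mathbf{g}}$, then $\mathbf{y}^*=-\frac{f_A(\boldsymbol{\alpha}^* )-\tilde{\mathbf{g}}}{\|f_A(\boldsymbol{\alpha}^* )-\tilde{\mathbf{g}}\|_2}$ minimizes $Q_1^{(g)}(\mathbf{y})-\langle\mathbf{y},\tilde{\mathbf{g}}\rangle$ over $\|\mathbf{y}\|_2\le1$; (c) for all $\boldsymbol{\alpha},\boldsymbol{\beta}\in\mathbb{R}^m$, $\|\nabla\Psi(\boldsymbol{\alpha})-\nabla\Psi(\boldsymbol{\beta})\|_2\le L\|\boldsymbol{\alpha}-\boldsymbol{\beta}\|_2$ with $L=4\max_{u\in\mathcal{V}_\mathcal{G}}\sum_{v\in\mathcal{V}_\mathcal{G}}(A_{uv}+A_{vu})^2$.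
   Context: $Q_1^{(g)}(\mathbf{y})=\sum_{u,v\in\mathcal{V}_\mathcal{G}}A_{uv}\max\{y_u-y_v,0\}$ is the Lovász extension of the directed cut function $\mathrm{cut}_\mathcal{G}(\mathcal{S})=\sum_{u\in\mathcal{S},v\notin\mathcal{S}}A_{uv}$. The set $\tilde{\mathcal{E}}_\mathcal{G}$ consists of ordered pairs, so $(u,v)$ and $(v,u)$ are distinct elements. *)

(* Defs.v *)
From HB Require Import structures.
From mathcomp Require Import all_boot all_order all_algebra.
From mathcomp Require Import all_classical all_reals all_analysis.
Set Implicit Arguments. Unset Strict Implicit. Unset Printing Implicit Defensive.
Import Order.TTheory GRing.Theory Num.Theory.
Local Open Scope ring_scope.

Section Defs.
Variables (R : realType) (n : nat).
Implicit Types (A : 'M[R]_n) (y g : 'I_n -> R).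

Definition norm2 (T : finType) (x : T -> R) : R := Num.sqrt (\sum_i x i ^+ 2).
Definition inner (T : finType) (x y : T -> R) : R := \sum_i x i * y i.

Definition etilde A (u v : 'I_n) : bool := (0 < A u v) || (0 < A v u).

(* index set of the variables alpha: pairs (u,v) in E~ with u < v; m = #|EdgeIdx A| *)
Definition ekey A (p : 'I_n * 'I_n) : bool := (p.1 < p.2)%N && etilde A p.1 p.2.
Definition EdgeIdx A : Type := {p : 'I_n * 'I_n | ekey A p}.

Definition alpha_of A (al : EdgeIdx A -> R) (u v : 'I_n) : R :=
  if @insub _ (ekey A) (EdgeIdx A) (u, v) is Some e then al e
  else if @insub _ (ekey A) (EdgeIdx A) (v, u) is Some e then 1 - al e
  else 0.

Definition fA A (al : EdgeIdx A -> R) (u : 'I_n) : R :=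
  \sum_(v | etilde A u v) (A u v * alpha_of al u v - A v u * alpha_of al v u).

Definition Psi A g (al : EdgeIdx A -> R) : R :=
  norm2 (fun u => fA al u - g u) ^+ 2.

(* Lovasz extension of the directed cut function *)
Definition Q1 A y : R := \sum_u \sum_v A u v * Num.max (y u - y v) 0.

Definition in_cube (T : finType) (al : T -> R) : Prop := forall e, 0 <= al e <= 1.

Definition grad (T : finType) (F : (T -> R) -> R) (al : T -> R) : T -> R :=
  fun e => derive1 (fun t : R => F (fun e' => al e' + (if e' == e then t else 0))) 0.

Definition Lconst A : R := 4 * \big[Num.max/0]_u \sum_v (A u v + A v u) ^+ 2.

End Defs.
Arguments alpha_of {R n} A al u v.
Arguments fA {R n} A al u.
Arguments Psi {R n} A g al.

(* Main.v *)
Require Import Defs.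
From HB Require Import structures.
From mathcomp Require Import all_boot all_order all_algebra.
From mathcomp Require Import all_classical all_reals all_analysis.
From mathcomp Require Import ring lra.
Import Order.TTheory GRing.Theory Num.Theory.
Local Open Scope ring_scope.
Set Implicit Arguments. Unset Strict Implicit.

Definition alin (R : realType) (n : nat) (A : 'M[R]_n) (d : EdgeIdx A -> R) (u v : 'I_n) : R :=
  if @insub _ (ekey A) (EdgeIdx A) (u, v) is Some e then d e
  else if @insub _ (ekey A) (EdgeIdx A) (v, u) is Some e then - d e
  else 0.
Arguments alin {R n} A d u v.

Definition fL (R : realType) (n : nat) (A : 'M[R]_n) (d : EdgeIdx A -> R) (u : 'I_n) : R :=
  \sum_(v | etilde A u v) (A u v * alin A d u v - A v u * alin A d v u).
Arguments fL {R n} A d u.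

Lemma alpha_add (R : realType) (n : nat) (A : 'M[R]_n) (al d : EdgeIdx A -> R) u v :
  alpha_of A (fun e => al e + d e) u v = alpha_of A al u v + alin A d u v.
Proof.
rewrite /alpha_of /alin; case: insubP => [e _ _|_]; first by [].
case: insubP => [e _ _|_]; first by rewrite opprD addrA.
by rewrite addr0.
Qed.

Lemma alin_add (R : realType) (n : nat) (A : 'M[R]_n) (d1 d2 : EdgeIdx A -> R) u v :
  alin A (fun e => d1 e + d2 e) u v = alin A d1 u v + alin A d2 u v.
Proof.
rewrite /alin; case: insubP => [e _ _|_]; first by [].
case: insubP => [e _ _|_]; first by rewrite opprD.
by rewrite addr0.
Qed.

Lemma alin_scale (R : realType) (n : nat) (A : 'M[R]_n) (c : R) (d : EdgeIdx A -> R) u v :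
  alin A (fun e => c * d e) u v = c * alin A d u v.
Proof.
rewrite /alin; case: insubP => [e _ _|_]; first by [].
case: insubP => [e _ _|_]; first by rewrite mulrN.
by rewrite mulr0.
Qed.

Lemma alin_sum (R : realType) (n : nat) (A : 'M[R]_n) (I : finType) (F : I -> EdgeIdx A -> R) u v :
  alin A (fun e => \sum_i F i e) u v = \sum_i alin A (F i) u v.
Proof.
rewrite /alin; case: insubP => [e _ _|_]; first by [].
case: insubP => [e _ _|_]; first by rewrite sumrN.
by rewrite big1.
Qed.

Lemma alin_anti (R : realType) (n : nat) (A : 'M[R]_n) (d : EdgeIdx A -> R) u v :
  alin A d v u = - alin A d u v.
Proof.
rewrite /alin; case: (insubP (EdgeIdx A) (v, u)) => [e He _|Hvu].
  case: (insubP (EdgeIdx A) (u, v)) => [e' He' _|_]; last by rewrite opprK.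
  by move: He He'; rewrite /ekey /= => /andP[/ltnW + _] /andP[+ _]; rewrite leqNgt => /negP.
case: (insubP (EdgeIdx A) (u, v)) => [e _ _|_]; first by [].
by rewrite oppr0.
Qed.

Lemma fA_add (R : realType) (n : nat) (A : 'M[R]_n) (al d : EdgeIdx A -> R) u :
  fA A (fun e => al e + d e) u = fA A al u + fL A d u.
Proof.
rewrite /fA /fL -big_split /=; apply: eq_bigr => v _.
rewrite !alpha_add; ring.
Qed.

Lemma fL_add (R : realType) (n : nat) (A : 'M[R]_n) (d1 d2 : EdgeIdx A -> R) u :
  fL A (fun e => d1 e + d2 e) u = fL A d1 u + fL A d2 u.
Proof.
rewrite /fL -big_split /=; apply: eq_bigr => v _.
rewrite !alin_add; ring.
Qed.

Lemma fL_scale (R : realType) (n : nat) (A : 'M[R]_n) c (d : EdgeIdx A -> R) u :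
  fL A (fun e => c * d e) u = c * fL A d u.
Proof.
rewrite /fL mulr_sumr; apply: eq_bigr => v _.
rewrite !alin_scale; ring.
Qed.

Lemma fL_sum (R : realType) (n : nat) (A : 'M[R]_n) (I : finType) (F : I -> EdgeIdx A -> R) u :
  fL A (fun e => \sum_i F i e) u = \sum_i fL A (F i) u.
Proof.
rewrite /fL exchange_big /=; apply: eq_bigr => v _.
rewrite !alin_sum mulr_sumr mulr_sumr -sumrB; by [].
Qed.


Lemma fL_alt (R : realType) (n : nat) (A : 'M[R]_n) (A_nonneg : forall u v, 0 <= A u v)
  (d : EdgeIdx A -> R) u :
  fL A d u = \sum_v (A u v + A v u) * alin A d u v.
Proof.
rewrite /fL big_mkcond /=; apply: eq_bigr => v _; case: ifP => H.
  rewrite alin_anti; ring.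
move: H; rewrite /etilde => /negbT; rewrite negb_or -!leNgt => /andP[h1 h2].
have -> : A u v = 0 by apply/eqP; rewrite eq_le h1 A_nonneg.
have -> : A v u = 0 by apply/eqP; rewrite eq_le h2 A_nonneg.
ring.
Qed.

Definition asq (R : realType) (n : nat) (A : 'M[R]_n) (d : EdgeIdx A -> R) (p : 'I_n * 'I_n) : R :=
  if @insub _ (ekey A) (EdgeIdx A) p is Some e then d e ^+ 2 else 0.
Arguments asq {R n} A d p.

Lemma sq_alin (R : realType) (n : nat) (A : 'M[R]_n) (d : EdgeIdx A -> R) u v :
  alin A d u v ^+ 2 = asq A d (u, v) + asq A d (v, u).
Proof.
rewrite /alin /asq; case: (insubP (EdgeIdx A) (u, v)) => [e He _|Huv].
  case: (insubP (EdgeIdx A) (v, u)) => [e' He' _|_]; last by rewrite addr0.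
  by move: He He'; rewrite /ekey /= => /andP[/ltnW + _] /andP[+ _]; rewrite leqNgt => /negP.
case: (insubP (EdgeIdx A) (v, u)) => [e _ _|_]; last by rewrite expr0n /= addr0.
by rewrite sqrrN add0r.
Qed.

Lemma sum_asq (R : realType) (n : nat) (A : 'M[R]_n) (d : EdgeIdx A -> R) :
  \sum_(p : 'I_n * 'I_n) asq A d p = \sum_e d e ^+ 2.
Proof.
rewrite (bigID (ekey A)) /= [X in _ + X]big1 ?addr0; last first.
  by move=> p /negbTE Hp; rewrite /asq insubF.
rewrite (reindex_omap (val : EdgeIdx A -> 'I_n * 'I_n) insub); last first.
  by move=> p Hp; rewrite insubT.
apply: eq_big => [e|e _]; first by rewrite (valP e) /= valK eqxx.
by rewrite /asq valK.
Qed.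

Lemma sum_alin2 (R : realType) (n : nat) (A : 'M[R]_n) (d : EdgeIdx A -> R) :
  \sum_u \sum_v alin A d u v ^+ 2 = 2 * \sum_e d e ^+ 2.
Proof.
under eq_bigr do under eq_bigr do rewrite sq_alin.
under eq_bigr do rewrite big_split /=.
rewrite big_split /= [X in _ + X]exchange_big /= pair_bigA /=.
have S := sum_asq d.
have -> : \sum_(p : 'I_n * 'I_n) asq A d (p.1, p.2) = \sum_(p : 'I_n * 'I_n) asq A d p.
  by apply: eq_bigr => -[].
rewrite S; ring.
Qed.

Lemma CS2 (R : realType) (I : finType) (a b : I -> R) :
  (\sum_i a i * b i) ^+ 2 <= (\sum_i a i ^+ 2) * (\sum_i b i ^+ 2).
Proof.
have H : 0 <= \sum_i \sum_j (a i * b j - a j * b i) ^+ 2.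
  by apply: sumr_ge0 => i _; apply: sumr_ge0 => j _; exact: sqr_ge0.
have e1 i j : (a i * b j - a j * b i) ^+ 2 =
   a i ^+ 2 * b j ^+ 2 + a j ^+ 2 * b i ^+ 2 - 2 * ((a i * b i) * (a j * b j)) by ring.
rewrite (eq_bigr (fun i => \sum_j a i ^+ 2 * b j ^+ 2 + \sum_j a j ^+ 2 * b i ^+ 2
   - \sum_j 2 * ((a i * b i) * (a j * b j)))) in H; last first.
  by move=> i _; rewrite -big_split -sumrB /=; apply: eq_bigr => j _; exact: e1.
rewrite sumrB big_split /= [X in _ + X - _]exchange_big /= in H.
have P1 : \sum_i \sum_j a i ^+ 2 * b j ^+ 2 = (\sum_i a i ^+ 2) * (\sum_i b i ^+ 2).
  by rewrite mulr_suml; apply: eq_bigr => i _; rewrite mulr_sumr.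
have P2 : \sum_i \sum_j 2 * (a i * b i * (a j * b j)) = 2 * (\sum_i a i * b i) ^+ 2.
  rewrite expr2 big_distrl /= mulr_sumr; apply: eq_bigr => i _.
  rewrite big_distrr /= mulr_sumr; apply: eq_bigr => j _; ring.
rewrite P1 P2 in H.
lra.
Qed.


Definition Dm (R : realType) (n : nat) (A : 'M[R]_n) : R :=
  \big[Num.max/0]_u \sum_v (A u v + A v u) ^+ 2.

Lemma Dm_ge0 (R : realType) (n : nat) (A : 'M[R]_n) : 0 <= Dm A.
Proof. exact: bigmax_ge_id. Qed.

Lemma Dm_ge (R : realType) (n : nat) (A : 'M[R]_n) u : \sum_v (A u v + A v u) ^+ 2 <= Dm A.
Proof. exact: (le_bigmax _ (fun u => \sum_v (A u v + A v u) ^+ 2)). Qed.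

Lemma K1 (R : realType) (n : nat) (A : 'M[R]_n) (A_nonneg : forall u v, 0 <= A u v)
  (d : EdgeIdx A -> R) :
  \sum_u fL A d u ^+ 2 <= 2 * Dm A * \sum_e d e ^+ 2.
Proof.
apply: (@le_trans _ _ (\sum_u Dm A * \sum_v alin A d u v ^+ 2)).
  apply: ler_sum => u _; rewrite (fL_alt A_nonneg).
  apply: le_trans (CS2 _ _) _; apply: ler_wpM2r; last exact: Dm_ge.
  by apply: sumr_ge0 => v _; exact: sqr_ge0.
by rewrite -mulr_sumr sum_alin2 mulrA [Dm A * 2]mulrC.
Qed.

Lemma norm2_ge0 (R : realType) (T : finType) (x : T -> R) : 0 <= norm2 x.
Proof. exact: sqrtr_ge0. Qed.

Lemma norm2_sq (R : realType) (T : finType) (x : T -> R) : norm2 x ^+ 2 = \sum_i x i ^+ 2.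
Proof. by rewrite /norm2 sqr_sqrtr // sumr_ge0 // => i _; exact: sqr_ge0. Qed.

Lemma CSn (R : realType) (T : finType) (x y : T -> R) : inner x y <= norm2 x * norm2 y.
Proof.
rewrite /inner /norm2 -sqrtrM; last by apply: sumr_ge0 => i _; exact: sqr_ge0.
apply: le_trans (ler_norm _) _; rewrite -sqrtr_sqr ler_sqrt; last first.
  by apply: mulr_ge0; apply: sumr_ge0 => i _; exact: sqr_ge0.
exact: CS2.
Qed.

Lemma CSn' (R : realType) (T : finType) (x y : T -> R) : - (norm2 x * norm2 y) <= inner x y.
Proof.
have := CSn (fun i => - x i) y.
have -> : norm2 (fun i => - x i) = norm2 x by rewrite /norm2; congr Num.sqrt; apply: eq_bigr => i _; rewrite sqrrN.
have -> : inner (fun i => - x i) y = - inner x y by rewrite /inner -sumrN; apply: eq_bigr => i _; rewrite mulNr.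
by rewrite lerNl.
Qed.


Lemma dq (R : realType) (a b c : R) : derive1 (fun t : R => a + t * b + t ^+ 2 * c) 0 = b.
Proof.
rewrite derive1E.
have D : is_derive (0:R) 1 (fun t : R => a + t * b + t ^+ 2 * c) b.
  apply: is_derive_eq.
  rewrite expr0n /= !(scale0r, add0r, addr0, mul1r, scaler0).
  by rewrite /GRing.scale /= mulr1.
exact: derive_val.
Qed.

Definition delta (R : realType) (n : nat) (A : 'M[R]_n) (e : EdgeIdx A) : EdgeIdx A -> R :=
  fun e' => if e' == e then 1 else 0.

Lemma grad_eq (R : realType) (n : nat) (A : 'M[R]_n) g (al : EdgeIdx A -> R) e :
  grad (Psi A g) al e = 2 * \sum_u (fA A al u - g u) * fL A (delta e) u.
Proof.
rewrite /grad.
set w := fun u => fA A al u - g u; set c := fun u => fL A (delta e) u.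
have -> : (fun t => Psi A g (fun e' => al e' + (if e' == e then t else 0))) =
   (fun t => \sum_u w u ^+ 2 + t * (2 * \sum_u w u * c u) + t ^+ 2 * \sum_u c u ^+ 2).
  apply: funext => t; rewrite /Psi norm2_sq.
  have -> : \sum_u w u ^+ 2 + t * (2 * \sum_u w u * c u) + t ^+ 2 * \sum_u c u ^+ 2
     = \sum_u (w u ^+ 2 + t * (2 * (w u * c u)) + t ^+ 2 * c u ^+ 2).
    by rewrite !big_split /= -!mulr_sumr.
  apply: eq_bigr => u _.
  rewrite (_ : (fun e' => al e' + (if e' == e then t else 0)) = (fun e' => al e' + t * delta e e')); last first.
    by apply: funext => e'; rewrite /delta; case: ifP => _; rewrite ?mulr1 ?mulr0.
  rewrite fA_add fL_scale /w /c; ring.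
by rewrite dq.
Qed.

Lemma gradL (R : realType) (n : nat) (A : 'M[R]_n) (A_nonneg : forall u v, 0 <= A u v) g
  (al be : EdgeIdx A -> R) :
  norm2 (fun e => grad (Psi A g) al e - grad (Psi A g) be e)
       <= Lconst A * norm2 (fun e => al e - be e).
Proof.
set d := fun e => al e - be e.
set x := fun u => fL A d u.
set z := fun e => \sum_u x u * fL A (delta e) u.
have fAd u : fA A al u - g u - (fA A be u - g u) = x u.
  have -> : al = (fun e => be e + d e) by apply: funext => e; rewrite /d; ring.
  rewrite fA_add /x; ring.
have gz e : grad (Psi A g) al e - grad (Psi A g) be e = 2 * z e.
  rewrite !grad_eq -mulrBr -sumrB /z; congr (_ * _); apply: eq_bigr => u _.
  by rewrite -mulrBl fAd.
have zE e' : z e' = \sum_e z e * delta e e'.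
  rewrite (bigD1 e') //= /delta eqxx mulr1 big1 ?addr0 // => e He.
  by rewrite eq_sym (negbTE He) mulr0.
have fLz u : fL A z u = \sum_e z e * fL A (delta e) u.
  have -> : fL A z u = fL A (fun e' => \sum_e z e * delta e e') u.
    by congr (fL A _ u); apply: funext => e'; exact: zE.
  rewrite fL_sum; apply: eq_bigr => e _ /=; exact: fL_scale.
set N := \sum_e z e ^+ 2.
have NE : N = \sum_u x u * fL A z u.
  under [RHS]eq_bigr do rewrite fLz mulr_sumr.
  rewrite exchange_big /N; apply: eq_bigr => e _.
  rewrite expr2 {1}/z mulr_suml; apply: eq_bigr => u _; ring.
have N0 : 0 <= N by apply: sumr_ge0 => e _; exact: sqr_ge0.
have Sd0 : 0 <= \sum_e d e ^+ 2 by apply: sumr_ge0 => e _; exact: sqr_ge0.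
have D0 := Dm_ge0 A.
have NN : N ^+ 2 <= (2 * Dm A * \sum_e d e ^+ 2) * (2 * Dm A * N).
  rewrite {1}NE; apply: le_trans (CS2 _ _) _.
  apply: ler_pM.
  - by apply: sumr_ge0 => u _; exact: sqr_ge0.
  - by apply: sumr_ge0 => u _; exact: sqr_ge0.
  - exact: (K1 A_nonneg d).
  - exact: (K1 A_nonneg z).
have Nb : N <= 4 * Dm A ^+ 2 * \sum_e d e ^+ 2.
  have [->|Npos] := eqVneq N 0; first by rewrite mulr_ge0 // mulr_ge0 // sqr_ge0.
  have Np : 0 < N by rewrite lt_def Npos N0.
  rewrite -(ler_pM2r Np) -expr2; apply: le_trans NN _.
  rewrite le_eqVlt; apply/orP; left; apply/eqP; ring.
rewrite (_ : (fun e => _) = (fun e => 2 * z e)); last by apply: funext => e; exact: gz.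
rewrite /Lconst /norm2.
rewrite (_ : 4 * Dm A = Num.sqrt ((4 * Dm A) ^+ 2)); last first.
  by rewrite sqrtr_sqr ger0_norm // mulr_ge0.
rewrite -sqrtrM; last exact: sqr_ge0.
rewrite ler_sqrt; last by apply: mulr_ge0 => //; exact: sqr_ge0.
have -> : \sum_i (2 * z i) ^+ 2 = 4 * N by rewrite /N mulr_sumr; apply: eq_bigr => e _; ring.
rewrite -/(Dm A); lra.
Qed.


Lemma fL_delta (R : realType) (n : nat) (A : 'M[R]_n) (d : EdgeIdx A -> R) u :
  fL A d u = \sum_e d e * fL A (delta e) u.
Proof.
have -> : fL A d u = fL A (fun e' => \sum_e d e * delta e e') u.
  congr (fL A _ u); apply: funext => e'.
  rewrite (bigD1 e') //= /delta eqxx mulr1 big1 ?addr0 // => e He.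
  by rewrite eq_sym (negbTE He) mulr0.
rewrite fL_sum; apply: eq_bigr => e _ /=; exact: fL_scale.
Qed.

Lemma Psi_lin (R : realType) (n : nat) (A : 'M[R]_n) g :
  Psi A g = fun al => \sum_u (fA A (fun _ => 0) u + \sum_e al e * fL A (delta e) u - g u) ^+ 2.
Proof.
apply: funext => al; rewrite /Psi norm2_sq; apply: eq_bigr => u _.
rewrite (_ : fA A al u = fA A (fun _ => 0) u + fL A al u); first by rewrite fL_delta.
rewrite -fA_add; congr (fA A _ u); apply: funext => e; by rewrite add0r.
Qed.

Module Topo.
Import numFieldNormedType.Exports.
Import ArrowAsProduct.
Local Open Scope classical_set_scope.

Lemma cont_sum (R : realType) (T : topologicalType) (I : Type) (r : seq I) (F : I -> T -> R) :
  (forall i, continuous (F i : T -> R)) -> continuous ((fun x => \sum_(i <- r) F i x) : T -> R).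
Proof.
move=> cF; elim: r => [|a r IH].
  under eq_fun do rewrite big_nil; exact: cst_continuous.
under eq_fun do rewrite big_cons.
by move=> x; apply: continuousD; [exact: cF | exact: IH].
Qed.

Lemma contD' (R : realType) (T : topologicalType) (f h : T -> R) :
  continuous f -> continuous h -> continuous ((fun x => f x + h x) : T -> R).
Proof. by move=> cf ch x; apply: continuousD; [exact: cf|exact: ch]. Qed.

Lemma contM' (R : realType) (T : topologicalType) (f h : T -> R) :
  continuous f -> continuous h -> continuous ((fun x => f x * h x) : T -> R).
Proof. by move=> cf ch x; apply: continuousM; [exact: cf|exact: ch]. Qed.

Lemma contC' (R : realType) (T : topologicalType) (c : R) :
  continuous ((fun _ => c) : T -> R).
Proof. exact: cst_continuous. Qed.

Lemma contP' (R : realType) (I : finType) (i : I) :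
  continuous ((fun f => f i) : (I -> R) -> R).
Proof. exact: (@proj_continuous I (fun _ => R) i). Qed.

Lemma cube_compact (R : realType) (I : finType) :
  compact [set f : I -> R | forall i, 0 <= f i <= 1].
Proof.
have := @tychonoff I (fun _ => R) (fun _ => `[0, 1]%classic) (fun _ => @segment_compact R 0 1).
congr compact; apply: funext => f /=; apply: propext; split => H i; have := H i;
  by rewrite /= in_itv.
Qed.

Lemma exists_min (R : realType) (n : nat) (A : 'M[R]_n) g :
  exists2 al0 : EdgeIdx A -> R, in_cube al0 &
    forall al, in_cube al -> Psi A g al0 <= Psi A g al.
Proof.
have cP : continuous (Psi A g : (EdgeIdx A -> R) -> R).
  rewrite Psi_lin; apply: cont_sum => u.
  have ch : continuous ((fun al : EdgeIdx A -> R =>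
       fA A (fun _ => 0) u + \sum_e al e * fL A (delta e) u - g u) : (EdgeIdx A -> R) -> R).
    apply: contD'; last exact: contC'.
    apply: contD'; first exact: contC'.
    apply: cont_sum => e; apply: contM'; last exact: contC'.
    exact: contP'.
  exact: (contM' ch ch).
have ne : [set f : EdgeIdx A -> R | forall i, 0 <= f i <= 1] !=set0.
  by exists (fun _ => 0) => i; rewrite lexx ler01.
have [c cin cmin] := @compact_EVT_min _ R (Psi A g)
   [set f : EdgeIdx A -> R | forall i, 0 <= f i <= 1] ne (@cube_compact R (EdgeIdx A))
   (continuous_subspaceT cP).
exists c; first by move: cin; rewrite inE.
by move=> al Hal; apply: cmin; rewrite inE.
Qed.
End Topo.


Lemma mxl (R : realType) (x y : R) : y <= x -> Num.max x y = x.
Proof. by move=> h; rewrite /Num.max ltNge h. Qed.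

Lemma mxr (R : realType) (x y : R) : x <= y -> Num.max x y = y.
Proof.
move=> h; rewrite /Num.max; case: ifP => // /negbT; rewrite -leNgt => h'.
by apply/eqP; rewrite eq_le h' h.
Qed.

Lemma A0_of (R : realType) (n : nat) (A : 'M[R]_n) (A_nonneg : forall u v, 0 <= A u v) u v :
  ~~ etilde A u v -> A u v = 0 /\ A v u = 0.
Proof.
rewrite /etilde negb_or -!leNgt => /andP[h1 h2]; split.
  by apply/eqP; rewrite eq_le h1 A_nonneg.
by apply/eqP; rewrite eq_le h2 A_nonneg.
Qed.

Lemma fA_uncond (R : realType) (n : nat) (A : 'M[R]_n) (A_nonneg : forall u v, 0 <= A u v) al u :
  fA A al u = \sum_v (A u v * alpha_of A al u v - A v u * alpha_of A al v u).
Proof.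
rewrite /fA big_mkcond /=; apply: eq_bigr => v _; case: ifP => // /negbT H.
by have [-> ->] := A0_of A_nonneg H; rewrite !mul0r subrr.
Qed.

Lemma inner_fA (R : realType) (n : nat) (A : 'M[R]_n) (A_nonneg : forall u v, 0 <= A u v) y al :
  inner y (fA A al) = \sum_u \sum_v A u v * alpha_of A al u v * (y u - y v).
Proof.
rewrite /inner.
under eq_bigr do rewrite (fA_uncond A_nonneg) mulr_sumr.
have -> : \sum_u \sum_v y u * (A u v * alpha_of A al u v - A v u * alpha_of A al v u) =
  \sum_u \sum_v y u * (A u v * alpha_of A al u v) - \sum_u \sum_v y u * (A v u * alpha_of A al v u).
  rewrite -sumrB; apply: eq_bigr => u _; rewrite -sumrB; apply: eq_bigr => v _; ring.
rewrite [X in _ - X]exchange_big /= -sumrB; apply: eq_bigr => u _.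
rewrite -sumrB; apply: eq_bigr => v _; ring.
Qed.

Lemma alpha_cube (R : realType) (n : nat) (A : 'M[R]_n) al u v :
  in_cube al -> 0 <= alpha_of A al u v <= 1.
Proof.
move=> H; rewrite /alpha_of; case: insubP => [e _ _|_]; first exact: H.
case: insubP => [e _ _|_]; last by rewrite lexx ler01.
by have /andP[h1 h2] := H e; apply/andP; split; lra.
Qed.

Lemma Q1_ge (R : realType) (n : nat) (A : 'M[R]_n) (A_nonneg : forall u v, 0 <= A u v) y al :
  in_cube al -> inner y (fA A al) <= Q1 A y.
Proof.
move=> Hc; rewrite (inner_fA A_nonneg) /Q1; apply: ler_sum => u _; apply: ler_sum => v _.
rewrite -mulrA; apply: ler_wpM2l; first exact: A_nonneg.
have /andP[h1 h2] := alpha_cube u v Hc.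
have [h|h] := lerP 0 (y u - y v).
  nra.
nra.
Qed.

Lemma Q1_att (R : realType) (n : nat) (A : 'M[R]_n) (A_nonneg : forall u v, 0 <= A u v) y :
  exists2 al, in_cube al & inner y (fA A al) = Q1 A y.
Proof.
pose al := fun e : EdgeIdx A => if y (val e).2 <= y (val e).1 then (1 : R) else 0.
exists al.
  by move=> e; rewrite /al; case: ifP => _; rewrite ?lexx ?ler01.
rewrite (inner_fA A_nonneg) /Q1; apply: eq_bigr => u _; apply: eq_bigr => v _.
rewrite -mulrA.
rewrite /alpha_of; case: insubP => [e He Hv|Hn].
  rewrite /al Hv /=; congr (_ * _); case: ifP => h.
    by rewrite mul1r mxl // subr_ge0.
  by rewrite mul0r mxr // subr_le0 ltW // ltNge h.
case: insubP => [e He Hv|Hn2].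
  rewrite /al Hv /=; congr (_ * _); case: ifP => h.
    by rewrite subrr mul0r mxr // subr_le0.
  by rewrite subr0 mul1r mxl // subr_ge0 ltW // ltNge h.
rewrite mul0r mulr0.
have := A_nonneg u v; rewrite le_eqVlt => /orP[/eqP Hz|Hp]; first by rewrite -Hz mul0r.
have e1 : etilde A u v by rewrite /etilde Hp.
have e2 : etilde A v u by rewrite /etilde Hp orbT.
case: (ltngtP u v) => huv.
- by move: Hn; rewrite /ekey /= huv e1.
- by move: Hn2; rewrite /ekey /= huv e2.
- have huv' : u = v by apply: val_inj.
  by rewrite huv' subrr /Num.max ltxx mulr0.
Qed.


Lemma opt_cond (R : realType) (n : nat) (A : 'M[R]_n) g (als al : EdgeIdx A -> R) :
  in_cube als -> (forall al, in_cube al -> Psi A g als <= Psi A g al) -> in_cube al ->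
  0 <= \sum_u (fA A als u - g u) * (fA A al u - fA A als u).
Proof.
move=> Hs Hmin Ha.
set w := fun u => fA A als u - g u.
set d := fun e => al e - als e.
set D := fun u => fL A d u.
have fD u : fA A al u - fA A als u = D u.
  have -> : al = (fun e => als e + d e) by apply: funext => e; rewrite /d; ring.
  rewrite fA_add /D; ring.
under eq_bigr do rewrite fD.
set S := \sum_u w u * D u.
set Q := \sum_u D u ^+ 2.
have Q0 : 0 <= Q by apply: sumr_ge0 => u _; exact: sqr_ge0.
have key t : 0 <= t <= 1 -> 0 <= t * (2 * S) + t ^+ 2 * Q.
  move=> /andP[t0 t1].
  have Hc : in_cube (fun e => als e + t * d e).
    move=> e; have /andP[a0 a1] := Hs e; have /andP[b0 b1] := Ha e.
    rewrite /d; apply/andP; split; nra.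
  have := Hmin _ Hc; rewrite /Psi !norm2_sq.
  have -> : \sum_u (fA A (fun e => als e + t * d e) u - g u) ^+ 2 =
     \sum_u w u ^+ 2 + t * (2 * S) + t ^+ 2 * Q.
    have -> : \sum_u w u ^+ 2 + t * (2 * S) + t ^+ 2 * Q
       = \sum_u (w u ^+ 2 + t * (2 * (w u * D u)) + t ^+ 2 * D u ^+ 2).
      by rewrite !big_split /= -!mulr_sumr.
    apply: eq_bigr => u _; rewrite fA_add fL_scale /w /D; ring.
  rewrite -/w; lra.
rewrite leNgt; apply/negP => HS.
set k := Q - S.
have k0 : 0 < k by rewrite /k; lra.
set t := - S / k.
have tk : t * k = - S by rewrite /t divfK // gt_eqF.
have t0 : 0 <= t by rewrite /t divr_ge0 //; [lra | exact: ltW].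
have t1 : t <= 1 by rewrite /t ler_pdivrMr // mul1r /k; lra.
have h := key t; rewrite t0 t1 in h; have {}h := h isT.
have E : k ^+ 2 * (t * (2 * S) + t ^+ 2 * Q) = 2 * S * k * (t * k) + Q * (t * k) ^+ 2 by ring.
rewrite tk in E.
have h2 : 0 <= k ^+ 2 * (t * (2 * S) + t ^+ 2 * Q) by apply: mulr_ge0 => //; exact: sqr_ge0.
rewrite E /k in h2.
rewrite (_ : 2 * S * (Q - S) * - S + Q * (- S) ^+ 2 = (- S) ^+ 2 * (2 * S - Q)) in h2; last by ring.
have s2 : 0 < (- S) ^+ 2 by apply: exprn_gt0; lra.
have q2 : 2 * S - Q < 0 by lra.
have h3 : (- S) ^+ 2 * (2 * S - Q) < 0 by rewrite pmulr_rlt0.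
by move: h2; rewrite leNgt h3.
Qed.

Lemma inner_sub (R : realType) (T : finType) (y a b : T -> R) :
  inner y a - inner y b = inner y (fun u => a u - b u).
Proof. by rewrite /inner -sumrB; apply: eq_bigr => u _; rewrite mulrBr. Qed.

Lemma lower_bd (R : realType) (n : nat) (A : 'M[R]_n) (A_nonneg : forall u v, 0 <= A u v) g
  (al0 : EdgeIdx A -> R) y :
  in_cube al0 -> - (norm2 y * norm2 (fun u => fA A al0 u - g u)) <= Q1 A y - inner y g.
Proof.
move=> Hc; apply: le_trans (CSn' _ _) _; rewrite -inner_sub lerD2r.
exact: Q1_ge.
Qed.

Lemma partb (R : realType) (n : nat) (A : 'M[R]_n) (A_nonneg : forall u v, 0 <= A u v) g
  (als : EdgeIdx A -> R) :
  in_cube als -> (forall al, in_cube al -> Psi A g als <= Psi A g al) ->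
  0 < norm2 (fun w => fA A als w - g w) ->
  let ys := fun u => - ((fA A als u - g u) / norm2 (fun w => fA A als w - g w)) in
  [/\ norm2 ys <= 1,
      (forall y, norm2 y <= 1 -> Q1 A ys - inner ys g <= Q1 A y - inner y g) &
      Q1 A ys - inner ys g = - norm2 (fun u => fA A als u - g u)].
Proof.
move=> Hs Hmin Wp ys.
set W := norm2 (fun w => fA A als w - g w).
have W2 : \sum_u (fA A als u - g u) ^+ 2 = W ^+ 2 by rewrite /W norm2_sq.
have nys : norm2 ys = 1.
  rewrite /norm2 (_ : \sum_i ys i ^+ 2 = 1) ?sqrtr1 //.
  rewrite /ys; under eq_bigr do rewrite sqrrN expr_div_n.
  by rewrite -mulr_suml W2 divff // sqrf_eq0 gt_eqF.
have [al' Hc' Hatt] := Q1_att A_nonneg ys.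
have up : Q1 A ys - inner ys g <= - W.
  rewrite -Hatt inner_sub /inner.
  have := opt_cond Hs Hmin Hc'.
  have -> : \sum_i ys i * (fA A al' i - g i) =
      - (\sum_u (fA A als u - g u) * (fA A al' u - fA A als u) + \sum_u (fA A als u - g u) ^+ 2) / W.
    rewrite -big_split /= mulNr mulr_suml -sumrN; apply: eq_bigr => u _.
    rewrite /ys -/W; field; by rewrite gt_eqF.
  rewrite W2 => h.
  rewrite ler_pdivrMr // mulNr lerN2 -expr2; lra.
have lo := lower_bd A_nonneg g ys Hs; rewrite nys mul1r -/W in lo.
have val : Q1 A ys - inner ys g = - W by apply/eqP; rewrite eq_le up lo.
split => //; first by rewrite nys.
move=> y Hy; rewrite val; apply: le_trans (lower_bd A_nonneg g y Hs).
rewrite -/W lerN2 ler_piMl //; exact: ltW.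
Qed.

Unset Implicit Arguments.

Theorem theorem3 (R : realType) (n : nat) (A : 'M[R]_n) (g : 'I_n -> R)
  (A_nonneg : forall u v, 0 <= A u v) (A_noloop : forall u, A u u = 0) :
  (* (a) *)
  (exists y0 : 'I_n -> R, exists al0 : EdgeIdx A -> R,
     [/\ norm2 y0 <= 1,
         (forall y, norm2 y <= 1 -> Q1 A y0 - inner y0 g <= Q1 A y - inner y g),
         in_cube al0,
         (forall al, in_cube al ->
            norm2 (fun u => fA A al0 u - g u) <= norm2 (fun u => fA A al u - g u)) &
         Q1 A y0 - inner y0 g = - norm2 (fun u => fA A al0 u - g u)])
  /\
  (* (b) *)
  (forall als : EdgeIdx A -> R,
     in_cube als ->
     (forall al, in_cube al -> Psi A g als <= Psi A g al) ->
     (fun u => fA A als u) <> g ->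
     let ys := fun u => - ((fA A als u - g u) / norm2 (fun w => fA A als w - g w)) in
     norm2 ys <= 1 /\
     (forall y, norm2 y <= 1 -> Q1 A ys - inner ys g <= Q1 A y - inner y g))
  /\
  (* (c) *)
  (forall al be : EdgeIdx A -> R,
     norm2 (fun e => grad (Psi A g) al e - grad (Psi A g) be e)
       <= Lconst A * norm2 (fun e => al e - be e)).
Proof.
split; last split; last exact: gradL.
- have [al0 H0 Hmin] := Topo.exists_min A g.
  have nmin : forall al, in_cube al ->
      norm2 (fun u => fA A al0 u - g u) <= norm2 (fun u => fA A al u - g u).
    move=> al Hal; have := Hmin al Hal; rewrite /Psi => h.
    have a0 := norm2_ge0 (fun u => fA A al0 u - g u).
    have b0 := norm2_ge0 (fun u => fA A al u - g u).
    nra.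
  have [Wp|W0] := ltrP 0 (norm2 (fun u => fA A al0 u - g u)).
    have [h1 h2 h3] := partb A_nonneg H0 Hmin Wp.
    by eexists; exists al0; split; [exact: h1|exact: h2|exact: H0|exact: nmin|exact: h3].
  have W0' : norm2 (fun u => fA A al0 u - g u) = 0.
    by apply/eqP; rewrite eq_le W0 norm2_ge0.
  have Q10 : Q1 A (fun _ => 0) = 0.
    by rewrite /Q1 big1 // => u _; rewrite big1 // => v _; rewrite subrr /Num.max ltxx mulr0.
  have i0 : inner (fun _ => 0) g = 0 by rewrite /inner big1 // => u _; rewrite mul0r.
  exists (fun _ => 0), al0; split => //.
  + by rewrite /norm2 big1 ?sqrtr0 ?ler01 // => u _; rewrite expr0n.
  + move=> y Hy; rewrite Q10 i0 subr0.
    by have := lower_bd A_nonneg g y H0; rewrite W0' mulr0 oppr0.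
  + by rewrite Q10 i0 W0' subr0 oppr0.
- move=> als Hs Hmin Hne ys.
  have Wp : 0 < norm2 (fun w => fA A als w - g w).
    rewrite lt_def norm2_ge0 andbT; apply/negP => /eqP H0; apply: Hne.
    apply: funext => u; apply/eqP; rewrite -subr_eq0 -sqrf_eq0; apply/eqP.
    have := norm2_sq (fun w => fA A als w - g w); rewrite H0 expr0n /= => /esym/eqP.
    rewrite psumr_eq0 => [/allP /(_ u) |]; last by move=> i _; exact: sqr_ge0.
    by rewrite mem_index_enum => /(_ isT) /implyP /(_ isT) /eqP.
  by have [h1 h2 _] := partb A_nonneg Hs Hmin Wp.
Qed.
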